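(* Let $P\in\mathcal{P}$ and suppose $\nu:\mathcal{P}\to\mathcal{H}$ is pathwise differentiable at $P$ and that the local parameter space $\dot{\mathcal{H}}_P$ (the image of $\dot{\nu}_P$, equipped with the inner product of $\mathcal{H}$) is a reproducing kernel Hilbert space of real functions on a set $\mathcal{T}$, with feature map $t\mapsto K_t$. Define $\tilde{\phi}_P$ by $\tilde{\phi}_P(z)(t)=\dot{\nu}_P^*(K_t)(z)$ for $t\in\mathcal{T}$ and $P$-almost every $z$. Then: (i) if $\nu$ has an efficient influence function $\phi_P$ at $P$, then $\phi_P=\tilde{\phi}_P$ $P$-almost surely; (ii) if $\|\tilde{\phi}_P\|_{L^2(P;\mathcal{H})}<\infty$ (i.e. $\tilde\phi_P\in L^2(P;\mathcal H)$), then $\nu$ has an efficient influence function at $P$.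
   Context: Let $(\mathcal{Z},\mathbf{B})$ be a Polish space and $\mathcal{P}$ a set of probability distributions on it (the model), all dominated by a $\sigma$-finite measure $\lambda$. For $P\in\mathcal{P}$ and $s\in L^2(P)$, a submodel $\{P_\epsilon:\epsilon\in[0,\delta)\}\subset\mathcal{P}$ is quadratic mean differentiable at $P$ with score $s$ if $\|p_\epsilon^{1/2}-p^{1/2}-\epsilon s p^{1/2}/2\|_{L^2(\lambda)}=o(\epsilon)$ as $\epsilon\to0$, where $p_\epsilon=dP_\epsilon/d\lambda$, $p=dP/d\lambda$; $\mathscr{P}(P,\mathcal{P},s)$ denotes the set of such submodels. The tangent set at $P$ is $\{s\in L^2(P):\mathscr{P}(P,\mathcal{P},s)\neq\emptyset\}$ and the tangent space $\dot{\mathcal{P}}_P$ is its closed linear span in $L^2(P)$. $\mathcal{H}$ is a real separable Hilbert space. $\nu:\mathcal{P}\to\mathcal{H}$ is pathwise differentiable at $P$ if there is a continuous linear operator $\dot{\nu}_P:\dot{\mathcal{P}}_P\to\mathcal{H}$ (the local parameter) such that for every $s$ in the tangent set and every submodel in $\mathscr{P}(P,\mathcal{P},s)$, $\|\nu(P_\epsilon)-\nu(P)-\epsilon\dot{\nu}_P(s)\|_{\mathcal{H}}=o(\epsilon)$. Its Hilbert adjoint $\dot{\nu}_P^*:\mathcal{H}\to\dot{\mathcal{P}}_P$ is the efficient influence operator. Pointwise values $\dot{\nu}_P^*(h)(z)$ are taken from versions chosen so that $\{\dot{\nu}_P^*(h):h\in\mathcal{H}\}$ is a separable process: there exist a countable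 dense $\mathcal{H}'\subset\mathcal{H}$ and a $P$-probability-one set $\mathcal{Z}'$ such that for all $h\in\mathcal{H}$, $z\in\mathcal{Z}'$ there is a sequence $h_j\in\mathcal{H}'$ with $h_j\to h$ and $\dot{\nu}_P^*(h_j)(z)\to\dot{\nu}_P^*(h)(z)$. $\nu$ has efficient influence function (EIF) $\phi_P:\mathcal{Z}\to\mathcal{H}$ at $P$ if there is a $P$-probability-one set $\mathcal{Z}'$ with $\dot{\nu}_P^*(h)(z)=\langle h,\phi_P(z)\rangle_{\mathcal{H}}$ for all $h\in\mathcal{H}$, $z\in\mathcal{Z}'$. $L^2(P;\mathcal{H})$ is the space of Bochner measurable $f:\mathcal{Z}\to\mathcal{H}$ with $\|f\|_{L^2(P;\mathcal{H})}^2=\int\|f(z)\|_{\mathcal{H}}^2P(dz)<\infty$. *)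

(* Defs.v *)
From HB Require Import structures.
From mathcomp Require Import all_boot all_order all_algebra.
From mathcomp Require Import all_classical all_reals all_analysis.
Set Implicit Arguments. Unset Strict Implicit. Unset Printing Implicit Defensive.
Import Order.TTheory GRing.Theory Num.Theory.
Import numFieldNormedType.Exports.
Local Open Scope classical_set_scope.
Local Open Scope ring_scope.

Definition inner_product (R : realType) (H : normedModType R)
    (ip : H -> H -> R) : Prop :=
  (forall x y, ip x y = ip y x) /\
  (forall (a : R) (x y z : H), ip (a *: x + y) z = a * ip x z + ip y z) /\
  (forall x, ip x x = `|x| ^+ 2).

Definition separable_space (R : realType) (H : normedModType R) : Prop :=
  exists D : set H, countable D /\ closure D = setT.

(* the sigma-algebra of Z is the Borel sigma-algebra of a complete
   separable metric [dist] on Z *)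
Definition polish_measurable d (Z : measurableType d) (R : realType) : Prop :=
  exists dist : Z -> Z -> R,
    (forall x y, 0 <= dist x y) /\
    (forall x y, dist x y = 0 <-> x = y) /\
    (forall x y, dist x y = dist y x) /\
    (forall x y z, dist x z <= dist x y + dist y z) /\
    (forall u : nat -> Z,
       (forall e : R, 0 < e -> exists N, forall m n,
            (N <= m)%N -> (N <= n)%N -> dist (u m) (u n) < e) ->
       exists l, forall e : R, 0 < e -> exists N, forall n,
            (N <= n)%N -> dist (u n) l < e) /\
    (exists D : set Z, countable D /\
       forall x (e : R), 0 < e -> exists y, D y /\ dist x y < e) /\
    @measurable d Z =
      <<s [set A : set Z | forall x, A x ->
             exists e : R, 0 < e /\ forall y, dist x y < e -> A y] >>.

Section Setting.
Context d (Z : measurableType d) (R : realType).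

Definition density_of (lam : {measure set Z -> \bar R})
    (Q : set Z -> \bar R) (q : Z -> R) : Prop :=
  measurable_fun setT q /\ (forall z, 0 <= q z) /\
  forall A, measurable A -> Q A = (\int[lam]_(z in A) (q z)%:E)%E.

Definition L2 (P : probability Z R) (s : Z -> R) : Prop :=
  measurable_fun setT s /\ (\int[P]_z ((s z) ^+ 2)%:E < +oo)%E.

Definition l2norm (P : probability Z R) (s : Z -> R) : R :=
  Num.sqrt (fine (\int[P]_z ((s z) ^+ 2)%:E)).

Definition qmd_submodel (lam : {measure set Z -> \bar R})
    (M : set (probability Z R)) (P : probability Z R) (s : Z -> R)
    (Pe : R -> probability Z R) : Prop :=
  exists delta : R, 0 < delta /\
    (forall e, 0 <= e < delta -> M (Pe e)) /\
    exists (pe : R -> Z -> R) (p : Z -> R),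
      density_of lam P p /\
      (forall e, 0 <= e < delta -> density_of lam (Pe e) (pe e)) /\
      forall eta : R, 0 < eta -> exists d' : R, 0 < d' /\
        forall e, 0 < e < d' -> e < delta ->
          (\int[lam]_z ((Num.sqrt (pe e z) - Num.sqrt (p z)
                          - e * s z * Num.sqrt (p z) / 2) ^+ 2)%:E
             <= ((eta * e) ^+ 2)%:E)%E.

Definition tangent_set lam M P : set (Z -> R) :=
  [set s | L2 P s /\ exists Pe, qmd_submodel lam M P s Pe].

Definition lin_span (S : set (Z -> R)) : set (Z -> R) :=
  [set f | exists (n : nat) (c : 'I_n -> R) (g : 'I_n -> Z -> R),
     (forall i, S (g i)) /\ f = fun z => \sum_(i < n) c i * g i z].

(* closed linear span in L^2(P) of the tangent set *)
Definition tangent_space lam M P : set (Z -> R) :=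
  [set s | L2 P s /\ forall e : R, 0 < e -> exists u,
     lin_span (tangent_set lam M P) u /\
     (\int[P]_z ((s z - u z) ^+ 2)%:E < (e ^+ 2)%:E)%E].

(* A is a local parameter of nu at P (witness of pathwise
   differentiability): continuous linear on the tangent space *)
Definition local_parameter (H : normedModType R)
    (lam : {measure set Z -> \bar R}) (M : set (probability Z R))
    (P : probability Z R) (nu : probability Z R -> H)
    (A : (Z -> R) -> H) : Prop :=
  (forall (a : R) s1 s2, tangent_space lam M P s1 -> tangent_space lam M P s2 ->
      A (fun z => a * s1 z + s2 z) = a *: A s1 + A s2) /\
  (exists C : R, forall s, tangent_space lam M P s -> `|A s| <= C * l2norm P s) /\
  (forall s Pe, tangent_set lam M P s -> qmd_submodel lam M P s Pe ->
     forall eta : R, 0 < eta -> exists d' : R, 0 < d' /\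
       forall e, 0 < e < d' -> `|nu (Pe e) - nu P - e *: A s| <= eta * e).

(* Astar gives versions of the Hilbert adjoint of A *)
Definition adjoint_version (H : normedModType R) (P : probability Z R)
    (TSp : set (Z -> R)) (A : (Z -> R) -> H) (ip : H -> H -> R)
    (Astar : H -> Z -> R) : Prop :=
  (forall h, TSp (Astar h)) /\
  forall s h, TSp s ->
    (\int[P]_z (s z * Astar h z)%:E = (ip (A s) h)%:E)%E.

Definition separable_version (H : normedModType R) (P : probability Z R)
    (Astar : H -> Z -> R) : Prop :=
  exists (H' : set H) (Z' : set Z),
    countable H' /\ closure H' = setT /\ measurable Z' /\ P Z' = 1%E /\
    forall h z, Z' z -> exists hj : nat -> H,
      (forall j, H' (hj j)) /\ hj @ \oo --> h /\
      (fun j => Astar (hj j) z) @ \oo --> Astar h z.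

Definition is_eif (H : normedModType R) (P : probability Z R)
    (ip : H -> H -> R) (Astar : H -> Z -> R) (phi : Z -> H) : Prop :=
  exists Z' : set Z, measurable Z' /\ P Z' = 1%E /\
    forall h z, Z' z -> Astar h z = ip h (phi z).

Definition simple_H (H : normedModType R) (f : Z -> H) : Prop :=
  finite_set (range f) /\ forall y, measurable (f @^-1` [set y]).

Definition bochner_measurable (H : normedModType R) (P : probability Z R)
    (g : Z -> H) : Prop :=
  exists fn : nat -> Z -> H, (forall n, simple_H (fn n)) /\
    exists Z' : set Z, measurable Z' /\ P Z' = 1%E /\
      forall z, Z' z -> (fun n => fn n z) @ \oo --> g z.

Definition L2H (H : normedModType R) (P : probability Z R) (g : Z -> H) : Prop :=
  bochner_measurable P g /\ (\int[P]_z ((`|g z|) ^+ 2)%:E < +oo)%E.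

End Setting.

(* V (with the inner product of H), identified through [ev] with a space
   of real functions on T, is a reproducing kernel Hilbert space with
   feature map K *)
Definition rkhs_structure (R : realType) (H : normedModType R) (V : set H)
    (ip : H -> H -> R) (T : Type) (ev : H -> T -> R) (K : T -> H) : Prop :=
  closed V /\
  (forall (a : R) u v, V u -> V v -> ev (a *: u + v) = (fun t => a * ev u t + ev v t)) /\
  (forall u v, V u -> V v -> ev u = ev v -> u = v) /\
  (forall t, V (K t)) /\
  (forall h t, V h -> ev h t = ip h (K t)).

(* Main.v *)
Require Import Defs.
From HB Require Import structures.
From mathcomp Require Import all_boot all_order all_algebra.
From mathcomp Require Import all_classical all_reals all_analysis.
From mathcomp Require Import measurable_realfun.
From mathcomp Require Import ring lra.
Set Implicit Arguments. Unset Strict Implicit. Unset Printing Implicit Defensive.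
Import Order.TTheory GRing.Theory Num.Theory.
Import numFieldNormedType.Exports.
Local Open Scope classical_set_scope.
Local Open Scope ring_scope.

Section Hilbert.
Context (R : realType) (H : normedModType R) (ip : H -> H -> R).
Hypothesis hip : inner_product ip.

Lemma ipC x y : ip x y = ip y x. Proof. by case: hip. Qed.
Lemma ipZDl a x y z : ip (a *: x + y) z = a * ip x z + ip y z.
Proof. by case: hip => _ []. Qed.
Lemma ipxx x : ip x x = `|x| ^+ 2. Proof. by case: hip => _ []. Qed.
Lemma ip0l z : ip 0 z = 0.
Proof.
have := ipZDl (-1) 0 0 z; rewrite scaler0 addr0 mulN1r addNr; done.
Qed.
Lemma ipDl x y z : ip (x + y) z = ip x z + ip y z.
Proof. by have := ipZDl 1 x y z; rewrite scale1r mul1r. Qed.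
Lemma ipZl a x z : ip (a *: x) z = a * ip x z.
Proof. by have := ipZDl a x 0 z; rewrite addr0 ip0l addr0. Qed.
Lemma ipNl x z : ip (- x) z = - ip x z.
Proof. by rewrite -scaleN1r ipZl mulN1r. Qed.
Lemma ipBl x y z : ip (x - y) z = ip x z - ip y z.
Proof. by rewrite ipDl ipNl. Qed.
Lemma ip0r z : ip z 0 = 0. Proof. by rewrite ipC ip0l. Qed.
Lemma ipDr x y z : ip z (x + y) = ip z x + ip z y.
Proof. by rewrite ipC ipDl !(ipC z). Qed.
Lemma ipZr a x z : ip z (a *: x) = a * ip z x.
Proof. by rewrite ipC ipZl ipC. Qed.
Lemma ipNr x z : ip z (- x) = - ip z x.
Proof. by rewrite ipC ipNl ipC. Qed.
Lemma ipBr x y z : ip z (x - y) = ip z x - ip z y.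
Proof. by rewrite ipDr ipNr. Qed.
Lemma ipxx_ge0 x : 0 <= ip x x. Proof. by rewrite ipxx sqr_ge0. Qed.
Lemma ipxx_eq0 x : ip x x = 0 -> x = 0.
Proof. by rewrite ipxx => /eqP; rewrite sqrf_eq0 normr_eq0 => /eqP. Qed.

Lemma CS2 x y : ip x y ^+ 2 <= ip x x * ip y y.
Proof.
have [->|yn0] := eqVneq y 0; first by rewrite !ip0r expr0n /= mulr0.
have bpos : 0 < ip y y.
  rewrite lt_def ipxx_ge0 andbT; apply/eqP => /ipxx_eq0 y0.
  by rewrite y0 eqxx in yn0.
have h := ipxx_ge0 (ip y y *: x - ip x y *: y).
rewrite !(ipBl, ipBr, ipZl, ipZr) (ipC y x) in h.
nra.
Qed.

Lemma CS x y : `|ip x y| <= `|x| * `|y|.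
Proof.
rewrite -sqrtr_sqr -[X in _ <= X]ger0_norm ?mulr_ge0 // -sqrtr_sqr.
rewrite ler_sqrt ?sqr_ge0 // exprMn -!ipxx; exact: CS2.
Qed.

Lemma ip_lipl x y z : `|ip x z - ip y z| <= `|x - y| * `|z|.
Proof. by rewrite -ipBl CS. Qed.
Lemma ip_lipr x y z : `|ip z x - ip z y| <= `|x - y| * `|z|.
Proof. by rewrite -ipBr ipC CS. Qed.

End Hilbert.

Lemma subBB (V : zmodType) (x y z : V) : (x - y) - (x - z) = z - y.
Proof. by rewrite opprB addrC addrA subrK. Qed.

Section Proj.
Context (R : realType) (H : completeNormedModType R) (ip : H -> H -> R).
Hypothesis hip : inner_product ip.

Let ipBl := ipBl hip. Let ipBr := ipBr hip. Let ipZl := ipZl hip.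
Let ipZr := ipZr hip. Let ipDl := ipDl hip. Let ipDr := ipDr hip.
Let ipC := ipC hip.

Lemma aux (a b c e f g d p q : R) : a-b-(b-e) < d + p -> a - c - (c - f) < d + q -> 
 d <=  a - (2^-1 * b + 2^-1 * c) -
    (2^-1 * b + 2^-1 * c -
     (2^-1 * (2^-1 * e) + 2^-1 * (2^-1 * g) +
      (2^-1 * (2^-1 * g) + 2^-1 * (2^-1 * f)))) -> e - g - (g - f) <= 2 * p + 2 * q.
Proof.
set X := (X in d <= X).
have hX : 4 * X = 4 * a - 4 * b - 4 * c + e + 2 * g + f by rewrite /X; field.
move: X hX => X hX h1 h2 h3.
lra.
Qed.

Lemma proj_thm (W : set H) : closed W -> W 0 ->
  (forall a u v, W u -> W v -> W (a *: u + v)) ->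
  forall x, exists2 w, W w & forall u, W u -> ip (x - w) u = 0.
Proof.
move=> cW W0 Wlin x.
have WZ a u : W u -> W (a *: u) by move=> Wu; rewrite -[_ *: _]addr0; exact: Wlin.
pose E := [set r | exists2 w, W w & r = ip (x - w) (x - w)].
have lbE : has_lbound E.
  by exists 0 => r [w _ ->]; exact: ipxx_ge0.
have neE : nonempty E by exists (ip (x - 0) (x - 0)); exists 0.
set del := inf E.
have delle w : W w -> del <= ip (x - w) (x - w).
  by move=> Ww; apply: ge_inf => //; exists w.
have : forall n : nat, exists w, W w /\ ip (x - w) (x - w) < del + n.+1%:R^-1.
  move=> n; have [r [w Ww ->] hr] := @inf_adherent _ E (n.+1%:R^-1) ltac:(by []) (conj neE lbE).
  by exists w.
move=> /choice[w_ hw_].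
have key n m : ip (w_ n - w_ m) (w_ n - w_ m) <= 2 * n.+1%:R^-1 + 2 * m.+1%:R^-1.
  have [Wn hn] := hw_ n; have [Wm hm] := hw_ m.
  have := delle (2^-1 *: w_ n + 2^-1 *: w_ m) (Wlin _ _ _ Wn (WZ _ _ Wm)).
  move: hn hm.
  rewrite !(ipBl, ipBr, ipDl, ipDr, ipZl, ipZr).
  rewrite (ipC (w_ n) x) (ipC (w_ m) x) (ipC (w_ m) (w_ n)).
  move=> hn hm hmid.
  set a := ip x x in hn hm hmid *; set b := ip x (w_ n) in hn hm hmid *.
  set c := ip x (w_ m) in hn hm hmid *.
  set e := ip (w_ n) (w_ n) in hn hm hmid *.
  set f := ip (w_ m) (w_ m) in hn hm hmid *.
  set g := ip (w_ n) (w_ m) in hn hm hmid *.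
  move: hn hm hmid; apply: aux.
have cvw : cvg (w_ @ \oo).
  apply/cauchy_cvgP; apply: cauchy_exP => eps eps0.
  have e4 : 0 < eps ^+ 2 / 4 by rewrite divr_gt0 // exprn_gt0.
  have hN := near_infty_natSinv_lt (PosNum e4).
  near \oo => N.
  exists (w_ N); suff : \forall n \near \oo, ball (w_ N) eps (w_ n) by [].
  near=> n.
  rewrite -ball_normE /ball_ /=.
  have k := key N n.
  have hN1 : N.+1%:R^-1 < eps ^+ 2 / 4 by near: N.
  have hn1 : n.+1%:R^-1 < eps ^+ 2 / 4 by near: n.
  rewrite ipxx // in k; simpl in hN1, hn1.
  rewrite ltNge; apply/negP => hle.
  have : eps ^+ 2 <= `|w_ N - w_ n| ^+ 2 by rewrite !expr2; nra.
  move: k hN1 hn1; rewrite !ltr_pdivlMr //.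
  set a1 := N.+1%:R^-1; set a2 := n.+1%:R^-1; set v := `|w_ N - w_ n| ^+ 2.
  set E2 := eps ^+ 2.
  move=> *; have : v < v by lra.
  by rewrite ltxx.
set w := lim (w_ @ \oo).
have Ww : W w.
  apply: (@closed_cvg _ _ _ _ w_ W cW _ _ cvw).
  by apply: nearW => n; case: (hw_ n).
exists w => // u Wu.
set c := ip (x - w) u; set b := ip u u.
have b0 : 0 <= b by exact: ipxx_ge0.
have ineq t : 2 * t * c <= t ^+ 2 * b.
  apply/ler_addgt0Pr => eps eps0.
  have r0 : 0 < eps / (2 * (2 * `|t| * `|u| + 1)).
    by rewrite divr_gt0 // mulr_gt0 // ltr_wpDl // !mulr_ge0.
  have e2 : 0 < eps / 2 by rewrite divr_gt0.
  move/cvgrPdist_lt : cvw => /(_ _ r0) hw.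
  have hp := near_infty_natSinv_lt (PosNum e2).
  near \oo => n.
  have hd : `|w - w_ n| < eps / (2 * (2 * `|t| * `|u| + 1)) by near: n.
  have hpn : n.+1%:R^-1 < eps / 2 by near: n.
  have [Wn hn] := hw_ n.
  have := delle _ (Wlin t u (w_ n) Wu Wn).
  rewrite (_ : x - (t *: u + w_ n) = (x - w_ n) - t *: u); last first.
    by rewrite opprD addrA addrAC.
  have expand y : ip (y - t *: u) (y - t *: u) = ip y y - 2 * t * ip y u + t ^+ 2 * b.
    by rewrite !(ipBl, ipBr, ipZl, ipZr) (ipC u y) /b; ring.
  rewrite expand.
  set c' := ip (x - w_ n) u; set A := ip (x - w_ n) (x - w_ n) in hn *.
  move=> hdel.
  have h2 : `|c' - c| <= `|w - w_ n| * `|u|.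
    rewrite /c' /c; have := ip_lipl hip (x - w_ n) (x - w) u.
    by rewrite subBB.
  have h5 : 2 * t * (c - c') <= 2 * `|t| * (`|w - w_ n| * `|u|).
    rewrite -mulrA; apply: (le_trans (ler_norm _)).
    rewrite normrM normrM (ger0_norm (ltW (ltr0Sn _ 1))) -mulrA ler_pM2l //.
    by rewrite distrC; apply: ler_wpM2l.
  set d := `|w - w_ n| in hd h5.
  set K := 2 * `|t| * `|u| in r0 hd.
  have K0 : 0 <= K by rewrite !mulr_ge0.
  have d0 : 0 <= d by rewrite /d normr_ge0.
  have h6 : d * (2 * (K + 1)) < eps.
    by rewrite -ltr_pdivlMr ?mulr_gt0 // ltr_wpDl.
  have h7 : 2 * `|t| * (d * `|u|) = d * K by rewrite /K; ring.
  rewrite h7 in h5.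
  have h6' : 2 * (d * K) + 2 * d < eps by move: h6; rewrite mulrDr mulr1 mulrCA mulrDr; lra.
  move: hpn; rewrite ltr_pdivlMr // => hpn.
  set p := n.+1%:R^-1 in hn hpn.
  have h8 : 2 * t * c = 2 * t * c' + 2 * t * (c - c') by ring.
  rewrite h8.
  set X := 2 * t * c' in hdel *; set Y := 2 * t * (c - c') in h5 *.
  set Z2 := t ^+ 2 * b in hdel *; set dK := d * K in h5 h6'.
  lra.
have := ineq (c / (b + 1)).
set s := c / (b + 1) => hs.
have sb : s * (b + 1) = c by rewrite /s divfK // gt_eqF // ltr_wpDl.
rewrite -sb in hs *.
have : s ^+ 2 * (b + 2) <= 0 by nra.
move=> h; have s0 : s = 0 by nra.
by rewrite s0 mul0r.
Unshelve. all: by end_near.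
Qed.
End Proj.

Section L2sec.
Context d (Z : measurableType d) (R : realType) (P : probability Z R).
Local Notation L2 := (L2 P).

Lemma sq_meas (f : Z -> R) : measurable_fun setT f ->
  measurable_fun setT (fun z => ((f z) ^+ 2)%:E).
Proof. by move=> mf; apply/measurable_EFinP; exact: measurable_funX. Qed.

Lemma L2_int2 (f : Z -> R) : L2 f -> P.-integrable setT (fun z => ((f z) ^+ 2)%:E).
Proof.
move=> [mf fi]; apply/integrableP; split; first exact: sq_meas.
rewrite (eq_integral (fun z => ((f z) ^+ 2)%:E)) // => z _.
by rewrite gee0_abs // lee_fin sqr_ge0.
Qed.

Lemma int2_L2 (f : Z -> R) : measurable_fun setT f ->
  P.-integrable setT (fun z => ((f z) ^+ 2)%:E) -> L2 f.
Proof.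
move=> mf /integrableP[_ fi]; split => //.
rewrite (eq_integral (fun z => `|((f z) ^+ 2)%:E|%E)) // => z _.
by rewrite gee0_abs // lee_fin sqr_ge0.
Qed.

Lemma aux_ab (a b : R) : `|a * b| <= `|a ^+ 2 + b ^+ 2|.
Proof.
rewrite normrM [X in _ <= X]ger0_norm ?addr_ge0 ?sqr_ge0 //.
have ha : `|a| ^+ 2 = a ^+ 2 by rewrite real_normK ?num_real.
have hb : `|b| ^+ 2 = b ^+ 2 by rewrite real_normK ?num_real.
rewrite -ha -hb; have := sqr_ge0 (`|a| - `|b|); nra.
Qed.

Lemma L2_intM (f g : Z -> R) : L2 f -> L2 g -> P.-integrable setT (fun z => (f z * g z)%:E).
Proof.
move=> hf hg.
apply: (le_integrable measurableT _ _ (integrableD measurableT (L2_int2 hf) (L2_int2 hg))).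
- by apply/measurable_EFinP; apply: measurable_funM; [case: hf|case: hg].
- by move=> z _ /=; rewrite lee_fin aux_ab.
Qed.

Lemma L2_lin (a : R) (f g : Z -> R) : L2 f -> L2 g -> L2 (fun z => a * f z + g z).
Proof.
move=> hf hg.
have mf := hf.1; have mg := hg.1.
have mh : measurable_fun setT (fun z => a * f z + g z).
  by apply: measurable_funD => //; apply: measurable_funM.
apply: int2_L2 => //.
have I := integrableD measurableT (integrableZl measurableT (2 * a ^+ 2) (L2_int2 hf))
   (integrableZl measurableT 2 (L2_int2 hg)).
apply: (le_integrable measurableT _ _ I); first exact: sq_meas.
move=> z _ /=; rewrite lee_fin.
rewrite ger0_norm ?sqr_ge0 // ger0_norm; last first.
  by rewrite addr_ge0 // mulr_ge0 // ?sqr_ge0 // mulr_ge0 // sqr_ge0.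
have := sqr_ge0 (a * f z - g z); nra.
Qed.

Lemma int_fin (f g : Z -> R) : L2 f -> L2 g ->
  (\int[P]_z (f z * g z)%:E = (fine (\int[P]_z (f z * g z)%:E))%:E)%E.
Proof. by move=> hf hg; rewrite fineK // integrable_fin_num // L2_intM. Qed.

Lemma int2_fin (f : Z -> R) : L2 f ->
  (\int[P]_z ((f z) ^+ 2)%:E = (fine (\int[P]_z ((f z) ^+ 2)%:E))%:E)%E.
Proof. by move=> hf; rewrite fineK // integrable_fin_num // L2_int2. Qed.

Lemma int_linr (s : Z -> R) (a : R) (f g : Z -> R) : L2 s -> L2 f -> L2 g ->
  (\int[P]_z (s z * (a * f z + g z))%:E =
   a%:E * \int[P]_z (s z * f z)%:E + \int[P]_z (s z * g z)%:E)%E.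
Proof.
move=> hs hf hg.
rewrite (eq_integral (fun z => (a%:E * (s z * f z)%:E) + (s z * g z)%:E)%E); last first.
  by move=> z _; rewrite -EFinM -EFinD; congr (_%:E); ring.
rewrite (integralD measurableT (integrableZl measurableT a (L2_intM hs hf)) (L2_intM hs hg)).
by rewrite (integralZl measurableT (L2_intM hs hf)).
Qed.

Lemma sq0_ae (f : Z -> R) : measurable_fun setT f ->
  (\int[P]_z ((f z) ^+ 2)%:E = 0)%E -> {ae P, forall z, f z = 0}.
Proof.
move=> mf h0.
have := @ae_eq_integral_abs _ _ _ P setT measurableT _ (sq_meas mf).
rewrite (eq_integral (fun z => ((f z) ^+ 2)%:E)); last first.
  by move=> z _; rewrite gee0_abs // lee_fin sqr_ge0.
move=> [+ _] => /(_ h0); apply: filterS => z /(_ I) [] /eqP.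
by rewrite sqrf_eq0 => /eqP.
Qed.

Lemma ae_set (Q : Z -> Prop) : {ae P, forall z, Q z} ->
  exists Z', measurable Z' /\ P Z' = 1%E /\ forall z, Z' z -> Q z.
Proof.
move=> [N [mN N0 sub]]; exists (~` N); split; first exact: measurableC.
split; first by rewrite probability_setC // N0 sube0.
by move=> z nNz; apply: contrapT => nQ; apply: nNz; apply: sub.
Qed.

Lemma set_ae (Q : Z -> Prop) :
  (exists Z', measurable Z' /\ P Z' = 1%E /\ forall z, Z' z -> Q z) ->
  {ae P, forall z, Q z}.
Proof.
move=> [Z' [mZ [PZ sub]]]; exists (~` Z'); split.
- exact: measurableC.
- by rewrite probability_setC // PZ subee.
- by move=> z /= nQ Zz; apply: nQ; apply: sub.
Qed.

Lemma ae_countable (I : Type) (D : set I) (Q : I -> Z -> Prop) : countable D ->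
  (forall i, D i -> {ae P, forall z, Q i z}) ->
  {ae P, forall z, forall i, D i -> Q i z}.
Proof.
move=> /countable_injP[f finj] hQ.
have : forall n : nat, {ae P, forall z, forall i, D i -> f i = n -> Q i z}.
  move=> n; have [[i0 [Di0 fi0]]|no] := pselect (exists i, D i /\ f i = n).
    apply: filterS (hQ i0 Di0) => z Qz i Di fin.
    have -> : i = i0 by apply: finj; rewrite ?inE // fin fi0.
    exact: Qz.
  by apply: aeW => z i Di fin; exfalso; apply: no; exists i.
move/ae_foralln; apply: filterS => z h i Di; exact: (h (f i) i Di erefl).
Qed.

End L2sec.

Section Extra.
Context (R : realType) (H : normedModType R) (ip : H -> H -> R).
Hypothesis hip : inner_product ip.

Lemma ip_cvgl (hj : nat -> H) h y : hj @ \oo --> h ->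
  (fun j => ip (hj j) y) @ \oo --> ip h y.
Proof.
move=> c; apply/cvgrPdist_lt => eps e0.
have k0 : 0 < eps / (`|y| + 1) by rewrite divr_gt0 // ltr_wpDl.
move/cvgrPdist_lt : c => /(_ _ k0) c.
near=> j.
have hj' : `|h - hj j| < eps / (`|y| + 1) by near: j.
apply: (le_lt_trans (ip_lipl hip _ _ _)).
move: hj'; rewrite ltr_pdivlMr ?ltr_wpDl // => hj'.
have := normr_ge0 y; have := normr_ge0 (h - hj j); nra.
Unshelve. all: by end_near.
Qed.

Lemma dense_zero (D : set H) r : closure D = setT ->
  (forall d, D d -> ip d r = 0) -> r = 0.
Proof.
move=> cl hd.
have hc : closure D r by rewrite cl.
have key eps : 0 < eps -> `|r| ^+ 2 <= eps * `|r|.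
  move=> e0; have [dd [Ddd bd]] := hc _ (nbhsx_ballx r eps e0).
  move: bd; rewrite -ball_normE /ball_ /= => bd.
  have : ip r r = ip (r - dd) r by rewrite (ipBl hip) (hd dd Ddd) subr0.
  rewrite (ipxx hip) => ->.
  apply: (le_trans (ler_norm _)); apply: (le_trans (CS hip _ _)).
  by apply: ler_wpM2r => //; exact: ltW.
apply/normr0_eq0.
have [//|rn] := eqVneq `|r| 0.
have rp : 0 < `|r| by rewrite lt_def rn normr_ge0.
have h := key (`|r| / 2) (divr_gt0 rp (ltr0Sn _ 1)).
exfalso; move: h; rewrite expr2 mulrAC => h.
have xp : 0 < `|r| * `|r| by rewrite mulr_gt0.
move: h xp; set x := `|r| * `|r| => h xp.
clear -h xp; have : x < x by lra.
by rewrite ltxx.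
Qed.

Lemma hs_cvg (hs : nat -> H) h : (forall n, `|h - hs n| < n.+1%:R^-1) -> hs @ \oo --> h.
Proof.
move=> hh; apply/cvgrPdist_lt => e e0.
have := near_infty_natSinv_lt (PosNum e0).
apply: filterS => n hn; exact: lt_trans (hh n) hn.
Qed.

End Extra.

Section Main.
Context (R : realType) (d : measure_display) (Z : measurableType d)
  (H : completeNormedModType R) (ip : H -> H -> R)
  (lam : {measure set Z -> \bar R}) (M : set (probability Z R))
  (P : probability Z R) (nu : probability Z R -> H)
  (A : (Z -> R) -> H) (Astar : H -> Z -> R)
  (T : Type) (ev : H -> T -> R) (K : T -> H).
Hypothesis hip : inner_product ip.
Hypothesis hloc : local_parameter lam M P nu A.
Hypothesis hadj : adjoint_version P (tangent_space lam M P) A ip Astar.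
Hypothesis hrk : rkhs_structure (A @` tangent_space lam M P) ip ev K.
Local Notation TS := (tangent_space lam M P).
Local Notation V := (A @` TS).

Lemma TS_L2 s : TS s -> L2 P s. Proof. by case. Qed.

Lemma linspan_meas (u : Z -> R) : lin_span (tangent_set lam M P) u -> measurable_fun setT u.
Proof.
move=> [n [c [g [hg ->]]]].
apply: measurable_sum => i; apply: measurable_funM => //.
by have [[]] := hg i.
Qed.

Lemma linspan_lin (a : R) (u1 u2 : Z -> R) :
  lin_span (tangent_set lam M P) u1 -> lin_span (tangent_set lam M P) u2 ->
  lin_span (tangent_set lam M P) (fun z => a * u1 z + u2 z).
Proof.
move=> [n1 [c1 [g1 [hg1 ->]]]] [n2 [c2 [g2 [hg2 ->]]]].
pose c (i : 'I_(n1 + n2)) := match fintype.split i with inl j => a * c1 j | inr j => c2 j end.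
pose g (i : 'I_(n1 + n2)) := match fintype.split i with inl j => g1 j | inr j => g2 j end.
exists (n1 + n2)%N, c, g; split.
  by move=> i; rewrite /g; case: (fintype.split i).
apply: funext => z; rewrite big_split_ord /= mulr_sumr.
congr (_ + _); apply: eq_bigr => i _.
- by rewrite /c /g -[lshift _ _]/(unsplit (inl i)) unsplitK mulrA.
- by rewrite /c /g -[rshift _ _]/(unsplit (inr i)) unsplitK.
Qed.

Lemma TS_lin (a : R) (s1 s2 : Z -> R) : TS s1 -> TS s2 -> TS (fun z => a * s1 z + s2 z).
Proof.
move=> [L1 ap1] [L2' ap2]; split; first exact: L2_lin.
move=> e e0.
pose del := e / (2 * (`|a| + 1)).
have a10 : 0 < 2 * (`|a| + 1) by rewrite mulr_gt0 // ltr_wpDl.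
have del0 : 0 < del by rewrite divr_gt0.
have hd : del * (2 * (`|a| + 1)) = e by rewrite /del divfK // gt_eqF.
have [u1 [hu1 i1]] := ap1 del del0; have [u2 [hu2 i2]] := ap2 del del0.
exists (fun z => a * u1 z + u2 z); split; first exact: linspan_lin.
have mu1 := linspan_meas hu1; have mu2 := linspan_meas hu2.
have ms1 := L1.1; have ms2 := L2'.1.
have m1 : measurable_fun setT (fun z => s1 z - u1 z) by apply: measurable_funB.
have m2 : measurable_fun setT (fun z => s2 z - u2 z) by apply: measurable_funB.
have m12 : measurable_fun setT (fun z => a * s1 z + s2 z - (a * u1 z + u2 z)).
  apply: measurable_funB; apply: measurable_funD => //; exact: measurable_funM.
have n1 : forall z, setT z -> (0 <= ((s1 z - u1 z) ^+ 2)%:E)%E by move=> z _; rewrite lee_fin sqr_ge0.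
have n2 : forall z, setT z -> (0 <= ((s2 z - u2 z) ^+ 2)%:E)%E by move=> z _; rewrite lee_fin sqr_ge0.
have le1 : (\int[P]_z ((a * s1 z + s2 z - (a * u1 z + u2 z)) ^+ 2)%:E <=
    (2 * a ^+ 2)%:E * \int[P]_z ((s1 z - u1 z) ^+ 2)%:E +
    2%:E * \int[P]_z ((s2 z - u2 z) ^+ 2)%:E)%E.
  have k0 : 0 <= 2 * a ^+ 2 by rewrite mulr_ge0 // sqr_ge0.
  rewrite -(ge0_integralZl_EFin P measurableT n1 (sq_meas m1) k0).
  rewrite -(ge0_integralZl_EFin P measurableT n2 (sq_meas m2) (ler0n _ 2)).
  rewrite -ge0_integralD //; last 4 first.
  - by move=> z _; apply: mule_ge0; rewrite lee_fin ?sqr_ge0.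
  - by apply: measurable_funeM; exact: sq_meas.
  - by move=> z _; apply: mule_ge0; rewrite lee_fin ?sqr_ge0.
  - by apply: measurable_funeM; exact: sq_meas.
  apply: ge0_le_integral => //.
  - by move=> z _; rewrite lee_fin sqr_ge0.
  - exact: sq_meas.
  - apply: emeasurable_funD; apply/measurable_EFinP; apply: measurable_funM => //;
      exact: measurable_funX.
  - move=> z _; rewrite -!EFinM -EFinD lee_fin.
    have := sqr_ge0 (a * (s1 z - u1 z) - (s2 z - u2 z)); nra.
apply: (le_lt_trans le1).
have g1 := integral_ge0 P n1; have g2 := integral_ge0 P n2.
move: i1 i2 g1 g2.
set I1 := (\int[P]_z ((s1 z - u1 z) ^+ 2)%:E)%E; set I2 := (\int[P]_z ((s2 z - u2 z) ^+ 2)%:E)%E.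
move=> i1 i2 g1 g2.
have f1 : I1 \is a fin_num by rewrite ge0_fin_numE // (lt_trans i1) ?ltry.
have f2 : I2 \is a fin_num by rewrite ge0_fin_numE // (lt_trans i2) ?ltry.
move: i1 i2 g1 g2; rewrite -(fineK f1) -(fineK f2) !lte_fin !lee_fin.
set r1 := fine I1; set r2 := fine I2 => i1 i2 g1 g2.
have ha : a ^+ 2 = `|a| ^+ 2 by rewrite real_normK ?num_real.
rewrite ha -hd.
have aa := normr_ge0 a.
nra.
Qed.

Lemma TS0 : TS (fun _ => 0).
Proof.
have I0 : (\int[P]_z (((fun _ : Z => (0 : R)) z) ^+ 2)%:E = 0)%E.
  by rewrite (eq_integral (fun _ => 0%E)) ?integral0 // => z _; rewrite expr0n.
split.
  by split; [exact: measurable_cst | rewrite I0 ltry].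
move=> e e0; exists (fun _ => 0); split.
  exists 0%N, (fun _ => 0), (fun _ _ => 0); split; first by case.
  by apply: funext => z; rewrite big_ord0.
rewrite (eq_integral (fun _ => 0%E)); last by move=> z _; rewrite subrr expr0n.
by rewrite integral0 lte_fin exprn_gt0.
Qed.

Lemma A0 : A (fun _ => 0) = 0.
Proof.
have := hloc.1 (-1) _ _ TS0 TS0.
rewrite (_ : (fun z : Z => -1 * 0 + 0) = (fun _ => 0)); last first.
  by apply: funext => z; rewrite mulr0 addr0.
by rewrite scaleN1r addNr.
Qed.

Lemma V0 : V 0.
Proof. by exists (fun _ => 0); [exact: TS0 | exact: A0]. Qed.

Lemma V_lin (a : R) u v : V u -> V v -> V (a *: u + v).
Proof.
move=> [s1 h1 <-] [s2 h2 <-]; exists (fun z => a * s1 z + s2 z).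
  exact: TS_lin.
exact: hloc.1.
Qed.

Lemma V_closed : closed V. Proof. by case: hrk. Qed.

Lemma Astar_TS h : TS (Astar h). Proof. by case: hadj. Qed.

Lemma adj_int s h : TS s ->
  (\int[P]_z (s z * Astar h z)%:E = (ip (A s) h)%:E)%E.
Proof. by move=> hs; case: hadj => _; apply. Qed.

Lemma TS_zero (D : Z -> R) : TS D ->
  (forall s, TS s -> \int[P]_z (s z * D z)%:E = 0)%E ->
  {ae P, forall z, D z = 0}.
Proof.
move=> hD h0; apply: sq0_ae; first by case: hD => [[]].
by rewrite -(h0 _ hD); apply: eq_integral => z _; rewrite expr2.
Qed.

Lemma Astar_perp h : (forall v, V v -> ip v h = 0) ->
  {ae P, forall z, Astar h z = 0}.
Proof.
move=> hp; apply: TS_zero; first exact: Astar_TS.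
move=> s hs; rewrite adj_int // hp //; by exists s.
Qed.

Lemma Astar_lin (a : R) h1 h2 :
  {ae P, forall z, Astar (a *: h1 + h2) z = a * Astar h1 z + Astar h2 z}.
Proof.
pose F := fun z => a * Astar h1 z + Astar h2 z.
pose G := Astar (a *: h1 + h2).
have TF : TS F by apply: TS_lin; exact: Astar_TS.
have TG : TS G by exact: Astar_TS.
have TD : TS (fun z => -1 * F z + G z) by exact: TS_lin.
have := TS_zero TD.
have L s : TS s -> L2 P s by case.
have LF := L F TF; have LG := L G TG.
have L1 := L _ (Astar_TS h1); have L2' := L _ (Astar_TS h2).
move=> h.
have : {ae P, forall z, -1 * F z + G z = 0}.
  apply: h => s hs.
  have Ls := L _ hs.
  rewrite int_linr //.
  rewrite /F int_linr //.
  rewrite !adj_int // /G (ipDr hip) (ipZr hip).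
  by rewrite -!EFinM -!EFinD; congr (_%:E); ring.
move=> hD; apply: (filterS _ hD) => z /=; rewrite /F /G => hz; lra.
Qed.

Lemma Astar_bound : exists C : R, 0 <= C /\ forall x,
  fine (\int[P]_z ((Astar x z) ^+ 2)%:E) <= C ^+ 2 * `|x| ^+ 2.
Proof.
have [C0 hC0] := hloc.2.1.
exists `|C0|; split => // x.
set u := Astar x.
have Tu : TS u by exact: Astar_TS.
have Lu : L2 P u by case: Tu.
set N := fine (\int[P]_z ((u z) ^+ 2)%:E).
have N0 : 0 <= N by apply: fine_ge0; apply: integral_ge0 => z _; rewrite lee_fin sqr_ge0.
have NE : N = ip (A u) x.
  have := adj_int x Tu; rewrite -/u.
  rewrite (eq_integral (fun z => ((u z) ^+ 2)%:E)); last by move=> z _; rewrite expr2.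
  by rewrite (int2_fin Lu) => -[].
have hA := hC0 u Tu; rewrite /l2norm -/N in hA.
set r := Num.sqrt N in hA.
have r0 : 0 <= r by exact: sqrtr_ge0.
have Nr : N = r ^+ 2 by rewrite sqr_sqrtr.
have hA' : `|A u| <= `|C0| * r.
  apply: (le_trans hA); apply: ler_wpM2r => //; exact: ler_norm.
have hN : N <= `|C0| * r * `|x|.
  rewrite NE; apply: (le_trans (ler_norm _)); apply: (le_trans (CS hip _ _)).
  by apply: ler_wpM2r.
rewrite Nr in hN *.
have xx := normr_ge0 x; have cc := normr_ge0 C0.
have : r <= `|C0| * `|x|.
  have [->|rp] := eqVneq r 0; first by rewrite mulr_ge0.
  have rp' : 0 < r by rewrite lt_def rp r0.
  nra.
move=> h; nra.
Qed.

Let hrk5 : forall h t, V h -> ev h t = ip h (K t).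
Proof. by case: hrk => _ [_ [_ [_ h]]]. Qed.

Lemma part1 (phi : Z -> H) : separable_space H -> is_eif P ip Astar phi ->
  exists Z', measurable Z' /\ P Z' = 1%E /\
    forall z, Z' z -> V (phi z) /\ ev (phi z) = (fun t => Astar (K t) z).
Proof.
move=> [D [cD clD]] [Z1 [mZ1 [PZ1 h1]]].
have /choice[q hq] : forall x, exists w, V w /\ forall u, V u -> ip (x - w) u = 0.
  move=> x; have [w Vw hw] := proj_thm hip V_closed V0 V_lin x.
  by exists w.
have hD : forall dd, D dd -> {ae P, forall z, Astar (dd - q dd) z = 0}.
  move=> dd _; apply: Astar_perp => v Vv; rewrite (ipC hip); exact: (hq dd).2.
have ae1 := ae_countable cD hD.
have ae2 : {ae P, forall z, Z1 z} by apply: set_ae; exists Z1.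
apply: ae_set; move: ae1 ae2; apply: filterS2 => z hz Z1z.
have hz1 h : Astar h z = ip h (phi z) by exact: h1.
set p := phi z; set w := q p; set r := p - w.
have hr : forall u, V u -> ip r u = 0 by exact: (hq p).2.
have hdr : forall dd, D dd -> ip dd r = 0.
  move=> dd Ddd; have := hz dd Ddd; rewrite hz1.
  have -> : phi z = r + w by rewrite /r subrK.
  rewrite (ipDr hip) ((hq dd).2 w (hq p).1) addr0 (ipBl hip).
  by rewrite (ipC hip (q dd)) (hr _ (hq dd).1) subr0.
have r0 : r = 0 := dense_zero hip clD hdr.
have pw : p = w by apply/eqP; rewrite -subr_eq0 -/r r0.
have Vp : V p by rewrite pw; exact: (hq p).1.
split => //; apply: funext => t.
by rewrite hz1 (ipC hip) hrk5.
Qed.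

Section Part2.
Variable g : Z -> H.
Hypothesis hg : {ae P, forall z, V (g z) /\ ev (g z) = (fun t => Astar (K t) z)}.
Let S := [set h | {ae P, forall z, Astar h z = ip h (g z)}].

Lemma S_lin (a : R) h1 h2 : S h1 -> S h2 -> S (a *: h1 + h2).
Proof.
move=> s1 s2; rewrite /S /= in s1 s2 *.
have e12 := filterS2 (ae_filter_ringOfSetsType P) (fun z (x1 : Astar h1 z = ip h1 (g z))
   (x2 : Astar h2 z = ip h2 (g z)) => conj x1 x2) s1 s2.
have e123 := filterS2 (ae_filter_ringOfSetsType P) (fun z (x0 : Astar (a *: h1 + h2) z = a * Astar h1 z + Astar h2 z)
  (x12 : Astar h1 z = ip h1 (g z) /\ Astar h2 z = ip h2 (g z)) => conj x0 x12) (Astar_lin a h1 h2) e12.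
apply: (filterS _ e123) => z [-> [-> ->]].
by rewrite (ipZDl hip).
Qed.

Lemma S0 : S 0.
Proof.
rewrite /S /=.
have hp := Astar_perp (h := 0) (fun v _ => ip0r hip v).
by apply: (filterS _ hp) => z ->; rewrite (ip0l hip).
Qed.

Lemma S_K t : S (K t).
Proof.
rewrite /S /=; apply: (filterS _ hg) => z [Vg Eg].
by rewrite (ipC hip) -hrk5 // Eg.
Qed.

Lemma S_perp h : (forall v, V v -> ip h v = 0) -> S h.
Proof.
move=> hp; rewrite /S /=.
have := Astar_perp (h := h) (fun v Vv => etrans (ipC hip v h) (hp v Vv)).
move=> hA; apply: (filterS2 (ae_filter_ringOfSetsType P) _ hg hA) => z [Vg _] ->.
by rewrite hp.
Qed.

Lemma S_closed : closed S.
Proof.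
rewrite /closed => h hcl.
have /choice[hs hhs] : forall n : nat, exists hn, S hn /\ `|h - hn| < n.+1%:R^-1.
  move=> n; have n0 : 0 < n.+1%:R^-1 :> R by rewrite invr_gt0.
  have [hn [Shn bn]] := hcl _ (nbhsx_ballx h _ n0).
  by exists hn; split => //; move: bn; rewrite -ball_normE /ball_.
have hcv : hs @ \oo --> h := hs_cvg (fun n => (hhs n).2).
have [C [C0 hC]] := Astar_bound.
have e1 : \forall z \ae P, forall n, Astar (hs n) z = ip (hs n) (g z).
  by apply: (@ae_foralln _ _ _ P (fun n z => Astar (hs n) z = ip (hs n) (g z))) => n; exact: (hhs n).1.
have [Zs [mZs [PZs hZs]]] := ae_set e1.
pose a_ n z := Astar h z - Astar (hs n) z.
pose F z := Astar h z - ip h (g z).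
have mA x : measurable_fun setT (Astar x) by have [[m _] _] := Astar_TS x.
have ma n : measurable_fun setT (a_ n) by apply: measurable_funB.
have conv z : Zs z -> (fun n => a_ n z) @ \oo --> F z.
  move=> Zz; rewrite (_ : (fun n => a_ n z) = (cst (Astar h z) - (fun n => ip (hs n) (g z)))); last first.
    by apply: funext => n; rewrite /a_ (hZs z Zz n).
  exact: (cvgB (cvg_cst (Astar h z)) (ip_cvgl hip hcv)).
have mF : measurable_fun Zs F.
  apply: (measurable_fun_cvg (h := a_)) => [m|z Zz]; last exact: conv.
  exact: (measurable_funS measurableT (@subsetT _ Zs) (ma m)).
pose f n z := ((a_ n z) ^+ 2)%:E.
have mf n : measurable_fun Zs (f n).
  exact: (measurable_funS measurableT (@subsetT _ Zs) (sq_meas (ma n))).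
have f0 n z : Zs z -> (0 <= f n z)%E by move=> _; rewrite lee_fin sqr_ge0.
have fat := fatou P mZs mf f0.
have lhs : (\int[P]_(z in Zs) limn_einf (f^~ z) = \int[P]_(z in Zs) ((F z) ^+ 2)%:E)%E.
  apply: eq_integral => z /set_mem Zz.
  have c : (fun n => f n z) @ \oo --> ((F z) ^+ 2)%:E.
    apply: cvg_EFin; first by apply: nearW.
    exact: (cvgM (conv z Zz) (conv z Zz)).
  exact: (cvg_limn_einf_sup c).1.
have bnd n : (\int[P]_(z in Zs) f n z <= (C ^+ 2 * `|h - hs n| ^+ 2)%:E)%E.
  apply: (le_trans (ge0_subset_integral P mZs measurableT (sq_meas (ma n)) _ (@subsetT _ Zs))).
    by move=> z _; rewrite lee_fin sqr_ge0.
  rewrite (ae_eq_integral (fun z => ((Astar (h - hs n) z) ^+ 2)%:E)) //; last 3 first.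
  - exact: sq_meas.
  - exact: sq_meas (mA _).
  - have := Astar_lin (-1) (hs n) h.
    apply: (filterS _) => z hz _.
    rewrite scaleN1r (addrC (- hs n)) in hz.
    by rewrite hz; congr (_%:E); rewrite /a_; congr (_ ^+ 2); ring.
  by rewrite (int2_fin (TS_L2 (Astar_TS _))) lee_fin; exact: hC.
have fin n : (\int[P]_(z in Zs) f n z)%E \is a fin_num.
  rewrite ge0_fin_numE; last by apply: integral_ge0 => z; exact: f0.
  exact: (le_lt_trans (bnd n) (ltry _)).
have rhs : limn_einf (fun n => \int[P]_(z in Zs) f n z)%E = 0%E.
  suff c : (fun n => \int[P]_(z in Zs) f n z)%E @ \oo --> 0%E.
    exact: (cvg_limn_einf_sup c).1.
  apply: cvg_EFin; first exact: nearW.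
  apply/cvgrPdist_lt => e e0.
  have k0 : 0 < e / (C ^+ 2 + 1) by rewrite divr_gt0 // ltr_wpDl // sqr_ge0.
  move/cvgrPdist_lt: hcv => hcv'.
  have A1 := hcv' 1 ltr01; have A2 := hcv' _ k0.
  near=> n.
  have b1 : `|h - hs n| < 1 by near: n.
  have b2 : `|h - hs n| < e / (C ^+ 2 + 1) by near: n.
  have hb := bnd n; rewrite -(fineK (fin n)) lee_fin in hb.
  have fg : 0 <= fine (\int[P]_(z in Zs) f n z)%E by apply: fine_ge0; apply: integral_ge0 => z; exact: f0.
  rewrite /= sub0r normrN ger0_norm //.
  move: b2; rewrite ltr_pdivlMr ?ltr_wpDl ?sqr_ge0 // => b2.
  move: hb fg b1 b2.
  set u := fine _; set x := `|h - hs n|; set c2 := C ^+ 2.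
  have x0 : 0 <= x by rewrite /x normr_ge0.
  have c20 : 0 <= c2 by rewrite /c2 sqr_ge0.
  move=> *; nra.
rewrite lhs rhs in fat.
have eq0 : (\int[P]_(z in Zs) `|((F z) ^+ 2)%:E| = 0)%E.
  rewrite (eq_integral (fun z => ((F z) ^+ 2)%:E)); last first.
    by move=> z _; rewrite gee0_abs // lee_fin sqr_ge0.
  by apply/eqP; rewrite eq_le fat integral_ge0 // => z _; rewrite lee_fin sqr_ge0.
have mF2 : measurable_fun Zs (fun z => ((F z) ^+ 2)%:E).
  by apply/measurable_EFinP; exact: measurable_funX.
have hae := (ae_eq_integral_abs P mZs mF2).1 eq0.
have aeZs : {ae P, forall z, Zs z} by apply: set_ae; exists Zs.
rewrite /S /=.
apply: (filterS2 (ae_filter_ringOfSetsType P) _ hae aeZs) => z hz Zz.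
move: (hz Zz) => /= /eqP; rewrite eqe sqrf_eq0 /F subr_eq0 => /eqP.
done.
Unshelve. all: by end_near.
Qed.

Lemma S_all h : S h.
Proof.
have [s Ss hs] := proj_thm hip S_closed S0 S_lin h.
set r := h - s.
have [w Vw hw] := proj_thm hip V_closed V0 V_lin r.
have Srw : S (r - w) by apply: S_perp; exact: hw.
have e1 : ip r (r - w) = 0 by exact: hs.
have e2 : ip w (r - w) = 0 by rewrite (ipC hip); exact: hw.
have : ip (r - w) (r - w) = 0 by rewrite (ipBl hip) e1 e2 subr0.
move/(ipxx_eq0 hip) => /eqP; rewrite subr_eq0 => /eqP rw.
have Vr : V r by rewrite rw.
have evr : ev r = ev 0.
  apply: funext => t; rewrite !hrk5 //; last exact: V0.
  by rewrite (ip0l hip); apply: hs; exact: S_K.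
have r0 : r = 0 by case: hrk => _ [_ [hinj _]]; exact: hinj _ _ Vr V0 evr.
have -> : h = s by apply/eqP; rewrite -subr_eq0 -/r r0.
exact: Ss.
Qed.

Lemma part2 : separable_version P Astar -> is_eif P ip Astar g.
Proof.
move=> [H' [Z' [cH' [clH' [mZ' [PZ' hsep]]]]]].
have ae1 := ae_countable cH' (fun h _ => S_all h).
have ae2 : {ae P, forall z, Z' z} by apply: set_ae; exists Z'.
have [Z3 [mZ3 [PZ3 hZ3]]] := ae_set (filterS2 (ae_filter_ringOfSetsType P)
   (fun z (x1 : forall h, H' h -> Astar h z = ip h (g z)) (x2 : Z' z) => conj x1 x2) ae1 ae2).
exists Z3; split => //; split => // h z /hZ3 [hz Zz].
have [hj [Hj [cj ca]]] := hsep h z Zz.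
have cb : (fun j => Astar (hj j) z) @ \oo --> ip h (g z).
  rewrite (_ : (fun j => Astar (hj j) z) = (fun j => ip (hj j) (g z))); last first.
    by apply: funext => j; rewrite hz.
  exact: ip_cvgl.
exact: (norm_cvg_unique ca cb).
Qed.

End Part2.

End Main.

Unset Implicit Arguments.
Theorem theorem1 (R : realType) (d : measure_display) (Z : measurableType d)
  (H : completeNormedModType R) (ip : H -> H -> R)
  (lam : {measure set Z -> \bar R}) (M : set (probability Z R))
  (P : probability Z R) (nu : probability Z R -> H)
  (A : (Z -> R) -> H) (Astar : H -> Z -> R)
  (T : Type) (ev : H -> T -> R) (K : T -> H) :
  polish_measurable Z R ->
  inner_product ip -> separable_space H ->
  sigma_finite setT lam ->
  (forall Q, M Q -> Q `<< lam) ->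
  M P ->
  local_parameter lam M P nu A ->
  adjoint_version P (tangent_space lam M P) A ip Astar ->
  separable_version P Astar ->
  rkhs_structure (A @` tangent_space lam M P) ip ev K ->
  let phit : Z -> T -> R := fun z t => Astar (K t) z in
  (forall phi : Z -> H, is_eif P ip Astar phi ->
     exists Z' : set Z, measurable Z' /\ P Z' = 1%E /\
       forall z, Z' z -> (A @` tangent_space lam M P) (phi z) /\ ev (phi z) = phit z) /\
  ((exists g : Z -> H, L2H P g /\
      exists Z' : set Z, measurable Z' /\ P Z' = 1%E /\
        forall z, Z' z -> (A @` tangent_space lam M P) (g z) /\ ev (g z) = phit z) ->
   exists phi : Z -> H, is_eif P ip Astar phi).

Proof.
move=> _ hip hsepH _ _ _ hloc hadj hsep hrk phit; split.
  move=> phi heif.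
  exact: (part1 hip hloc hadj hrk hsepH heif).
move=> [g [_ [Z2 [mZ2 [PZ2 h2]]]]].
exists g.
apply: (part2 hip hloc hadj hrk _ hsep).
by apply: set_ae; exists Z2.
Qed.
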